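(* Let $\Sigma$ be a finite ranked set (arities $\ge1$), $X$ a ranked set and $G\in\mathsf{V}X$. Then there is an operation $f$, taking an arity-respecting $X$-indexed family of models (for each $x\in X$, a model in the image of $\lfloor\cdot\rfloor$ on elements of $\mathsf{V}\Sigma$ of the arity of $x$) to a model, which is compatible with counting MSO and satisfies $f\big((\lfloor\eta(x)\rfloor)_{x\in X}\big)=\lfloor[\![G]\!](\eta)\rfloor$ (up to isomorphism) for every arity-preserving valuation $\eta:X\to\mathsf{V}\Sigma$.
   Context: Here a ranked set is a set whose elements have arities in $\{1,2,\dots\}$. A corner of a ranked set $V$ is $v[i]$ with $v\in V$, $1\le i\le$ arity of $v$. For $n\ge1$, an $n$-ary $\mathsf{V}$-hypergraph with ports over $\Sigma$ consists of a nonempty finite ranked set of hypervertices, an arity-preserving labelling by $\Sigma$, a binary directed edge relation on corners, and a total port function from corners to $\{1,\dots,n\}$ (corners mapped to $i$ are $i$-ports). $\mathsf{V}\Sigma$ denotes these up to isomorphism. Flattening of $K\in\mathsf{V}\mathsf{V}\Sigma$: hypervertices are pairs $(v,w)$, $v$ a hypervertex of $K$, $w$ a hypervertex of the label of $v$ (label and arity from $w$); arity that of $K$; if $w[i]$ is a $j$-port in the label of $v$ and $v[j]$ is a $k$-port in $K$, then $(v,w)[i]$ is a $k$-port; an edge $(v,w)[i]\to(v',w')[i']$ exists iff $v=v'$ and $w[i]\to w'[i']$ in the label of $v$, or $v[j]\to v'[j']$ in $K$ with $j,j'$ the port numbers of $w[i]$, $w'[i']$ in the labels of $v,v'$. $[\![G]\!](\eta)$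 is the flattening of $G$ with each label $x$ replaced by $\eta(x)$. For $K\in\mathsf{V}\Sigma$, the model $\lfloor K\rfloor$ has as universe the corners of the hypervertices, a binary relation for edges, for each $a\in\Sigma$ and $i\le$ arity of $a$ a unary relation selecting the $i$-th corners of hypervertices labelled $a$, and for each $i\le$ arity of $K$ a unary relation for the $i$-ports. Counting MSO (extended syntax) is MSO with predicates $|Y|\equiv k\bmod m$ (true iff $Y$ finite of size $\equiv k$ mod $m$), a set-inclusion predicate, a singleton predicate, and set constants $[\psi]$ for each quantifier-free formula $\psi(x)$ with one free variable; quantifier rank counts first- and second-order quantifiers alike. Two models are $(r,M)$-equivalent if they satisfy the same such sentences of quantifier rank at most $r$ using moduli only from $M\subseteq\mathbb{N}$. An operation on families of models is compatible with counting MSO if for all $r\in\mathbb{N}$ and $M\subseteq\mathbb{N}$, componentwise $(r,M)$-equivalent inputs give $(r,M)$-equivalent outputs. *)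

(* Defs.v *)
From mathcomp Require Import all_boot.
Set Implicit Arguments. Unset Strict Implicit. Unset Printing Implicit Defensive.

(** Corner [v[i]] (1 <= i <= arity v) is represented as [existT v i'] with
    [i' : 'I_(arity v)] (0-based).  Ports [1..n] are represented by ['I_n]. *)
Definition cornerT (V : Type) (S : Type) (ar : S -> nat) (lab : V -> S) :=
  {v : V & 'I_(ar (lab v))}.

Record hg (S : Type) (ar : S -> nat) (n : nat) := HG {
  hv : finType;
  hv_wit : hv;
  hlab : hv -> S;
  hedge : cornerT ar hlab -> cornerT ar hlab -> bool;
  hport : cornerT ar hlab -> 'I_n }.

Definition corner S ar n (K : @hg S ar n) : finType := cornerT ar (@hlab S ar n K).

Section Flatten.
Variables (Sig : finType) (arS : Sig -> nat) (X : Type) (arX : X -> nat) (n : nat).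
Variables (G : hg arX n) (eta : forall x : X, hg arS (arX x)).

Definition fhv : finType := {v : hv G & hv (eta (hlab v))}.
Definition fwit : fhv := existT _ (hv_wit G) (hv_wit (eta (hlab (hv_wit G)))).
Definition flab (p : fhv) : Sig := hlab (tagged p).

Definition fsplit (c : cornerT arS flab) : {v : hv G & corner (eta (hlab v))} :=
  existT _ (tag (tag c)) (existT _ (tagged (tag c)) (tagged c)).

(* port number of w[i] in eta(lab v), seen as a corner v[j] of G *)
Definition gcorner (s : {v : hv G & corner (eta (hlab v))}) : corner G :=
  existT _ (tag s) (hport (tagged s)).

Definition fedge (c c' : cornerT arS flab) : bool :=
  let s := fsplit c in let s' := fsplit c' in
  ((tag s == tag s') && hedge (tagged s) (tagged_as s s'))
  || hedge (gcorner s) (gcorner s').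

Definition fport (c : cornerT arS flab) : 'I_n := hport (gcorner (fsplit c)).

Definition hflatten : hg arS n := @HG Sig arS n fhv fwit flab fedge fport.
End Flatten.

Record model (U : Type) := Model {
  mu : finType;
  mE : mu -> mu -> bool;
  mP : U -> mu -> bool }.
Arguments mE {U} A _ _ : rename.
Arguments mP {U} A _ _ : rename.
Arguments mu {U} A : rename.

(** unary predicate symbols of [floor K] for [K] of arity [n]:
    [inl (a, i)] selects the i-th corners of hypervertices labelled a,
    [inr k] selects the k-ports. *)
Definition sigU (Sig : finType) (arS : Sig -> nat) (n : nat) : Type :=
  ({a : Sig & 'I_(arS a)} + 'I_n)%type.

Definition floor (Sig : finType) (arS : Sig -> nat) n (K : hg arS n)
  : model (sigU arS n) :=
  @Model _ (corner K) (@hedge _ _ _ K)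
    (fun (u : sigU arS n) (c : corner K) => match u with
     | inl ai => (hlab (tag c) == tag ai) && (nat_of_ord (tagged c) == nat_of_ord (tagged ai))
     | inr k => hport c == k end).

Definition miso U (A B : model U) : Prop :=
  exists h : mu A -> mu B, bijective h /\
    (forall x y, mE B (h x) (h y) = mE A x y) /\
    (forall u x, mP B u (h x) = mP A u x).

Section MSO.
Variable U : Type.

(* quantifier-free formulas psi(x) in the single first-order variable x *)
Inductive qf1 :=
| QTrue | QE | QP of U | QNot of qf1 | QAnd of qf1 & qf1.

Inductive sterm := SVar of nat | SConst of qf1.

Inductive form :=
| FE of nat & nat
| FP of U & nat
| FEq of nat & nat
| FIn of nat & sterm
| FMod of nat & nat & sterm
| FSub of sterm & sterm
| FSing of sterm
| FNot of form
| FAnd of form & form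
| FEx1 of nat & form
| FEx2 of nat & form.

Fixpoint qr (f : form) : nat :=
  match f with
  | FNot g => qr g
  | FAnd g h => maxn (qr g) (qr h)
  | FEx1 _ g | FEx2 _ g => (qr g).+1
  | _ => 0
  end.

Fixpoint mods_in (M : nat -> Prop) (f : form) : Prop :=
  match f with
  | FMod _ m _ => M m
  | FNot g => mods_in M g
  | FAnd g h => mods_in M g /\ mods_in M h
  | FEx1 _ g | FEx2 _ g => mods_in M g
  | _ => True
  end.

Definition sbound (b2 : nat -> bool) (Y : sterm) : bool :=
  match Y with SVar X => b2 X | SConst _ => true end.

(* all free variables of f are among b1 (first-order) / b2 (second-order) *)
Fixpoint wsc (b1 b2 : nat -> bool) (f : form) : bool :=
  match f with
  | FE x y | FEq x y => b1 x && b1 y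
  | FP _ x => b1 x
  | FIn x Y => b1 x && sbound b2 Y
  | FMod _ _ Y | FSing Y => sbound b2 Y
  | FSub Y Z => sbound b2 Y && sbound b2 Z
  | FNot g => wsc b1 b2 g
  | FAnd g h => wsc b1 b2 g && wsc b1 b2 h
  | FEx1 x g => wsc (fun z => (z == x) || b1 z) b2 g
  | FEx2 X g => wsc b1 (fun z => (z == X) || b2 z) g
  end.

Definition sentence (f : form) : bool := wsc (fun _ => false) (fun _ => false) f.

Variable A : model U.

Fixpoint qsat (t : mu A) (p : qf1) : bool :=
  match p with
  | QTrue => true
  | QE => mE A t t
  | QP u => mP A u t
  | QNot q => ~~ qsat t q
  | QAnd q r => qsat t q && qsat t r
  end.

Definition sval (e2 : nat -> {set mu A}) (Y : sterm) : {set mu A} :=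
  match Y with SVar X => e2 X | SConst p => [set t | qsat t p] end.

Fixpoint sat (e1 : nat -> option (mu A)) (e2 : nat -> {set mu A}) (f : form)
  : Prop :=
  match f with
  | FE x y => match e1 x, e1 y with Some a, Some b => mE A a b | _, _ => False end
  | FP u x => match e1 x with Some a => mP A u a | None => False end
  | FEq x y => match e1 x, e1 y with Some a, Some b => a = b | _, _ => False end
  | FIn x Y => match e1 x with Some a => a \in sval e2 Y | None => False end
  | FMod k m Y => #|sval e2 Y| = k %[mod m]
  | FSub Y Z => sval e2 Y \subset sval e2 Z
  | FSing Y => #|sval e2 Y| = 1
  | FNot g => ~ sat e1 e2 g
  | FAnd g h => sat e1 e2 g /\ sat e1 e2 h
  | FEx1 x g => exists t : mu A,
      sat (fun z => if z == x then Some t else e1 z) e2 g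
  | FEx2 X g => exists S : {set mu A},
      sat e1 (fun z => if z == X then S else e2 z) g
  end.

Definition holds (f : form) : Prop := sat (fun _ => None) (fun _ => set0) f.
End MSO.

Definition rM_equiv U (r : nat) (M : nat -> Prop) (A B : model U) : Prop :=
  forall f : form U, sentence f -> qr f <= r -> mods_in M f ->
    (holds A f <-> holds B f).

(** A model is in the image of floor on elements of V Sigma of arity k
    (up to isomorphism, since V Sigma consists of isomorphism classes). *)
Definition in_floor_image (Sig : finType) (arS : Sig -> nat) (k : nat)
  (A : model (sigU arS k)) : Prop :=
  exists K : hg arS k, miso A (floor K).

(* Main.v *)
Require Import Defs.
From mathcomp Require Import all_boot zify.
From Stdlib Require Import Classical FunctionalExtensionality ClassicalEpsilon.
Set Implicit Arguments. Unset Strict Implicit. Unset Printing Implicit Defensive.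

Section Gen.
Variable U : Type.

Definition QFalse : qf1 U := QNot (QTrue U).
Definition FFalse : form U := FSing (SConst QFalse).
Definition FTrue : form U := FNot FFalse.

Lemma card_setF (T : finType) : #|[set _ : T | false]| = 0.
Proof. by apply/eqP; rewrite cards_eq0; apply/eqP/setP => z; rewrite !inE. Qed.

Lemma sat_FFalse (C : model U) e1 e2 : ~ sat (A:=C) e1 e2 FFalse.
Proof.
rewrite /FFalse /=.
have -> : [set t : mu C | ~~ true] = set0 by apply/setP => t; rewrite !inE.
by rewrite cards0.
Qed.

Definition cs (b2 : nat -> bool) (Y : sterm U) : sterm U :=
  match Y with SVar X => if b2 X then SVar U X else SConst QFalse | c => c end.

Fixpoint close (b1 b2 : nat -> bool) (f : form U) : form U :=
  match f with
  | FE x y => if b1 x && b1 y then FE U x y else FFalse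
  | FP u x => if b1 x then FP u x else FFalse
  | FEq x y => if b1 x && b1 y then FEq U x y else FFalse
  | FIn x Y => if b1 x then FIn x (cs b2 Y) else FFalse
  | FMod k m Y => FMod k m (cs b2 Y)
  | FSub Y Z => FSub (cs b2 Y) (cs b2 Z)
  | FSing Y => FSing (cs b2 Y)
  | FNot g => FNot (close b1 b2 g)
  | FAnd g h => FAnd (close b1 b2 g) (close b1 b2 h)
  | FEx1 x g => FEx1 x (close (fun z => (z == x) || b1 z) b2 g)
  | FEx2 X g => FEx2 X (close b1 (fun z => (z == X) || b2 z) g)
  end.

Lemma qr_close f b1 b2 : qr (close b1 b2 f) = qr f.
Proof.
elim: f b1 b2 => //=; try (by move=> *; case: ifP).
- by move=> g IHg h IHh b1 b2; rewrite IHg IHh.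
- by move=> x g IH b1 b2; rewrite IH.
- by move=> x g IH b1 b2; rewrite IH.
Qed.

Lemma mods_close (M : nat -> Prop) f b1 b2 : mods_in M f -> mods_in M (close b1 b2 f).
Proof.
elim: f b1 b2 => //=; try (by move=> *; case: ifP).
- by move=> g IHg h IHh b1 b2 [H1 H2]; split; auto.
- by move=> x g IH b1 b2; apply: IH.
- by move=> x g IH b1 b2; apply: IH.
Qed.

Lemma wsc_close f b1 b2 : wsc b1 b2 (close b1 b2 f).
Proof.
elim: f b1 b2 => /=.
- by move=> x y b1 b2; case: ifP.
- by move=> u x b1 b2; case: ifP => //= ->.
- by move=> x y b1 b2; case: ifP.
- move=> x Y b1 b2; case E: (b1 x) => //=; rewrite E /=.
  by case: Y => [X|q] //=; case E2: (b2 X) => /=; rewrite ?E2.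
- by move=> k m [X|q] b1 b2 //=; case E2: (b2 X) => /=; rewrite ?E2.
- move=> [X|q] [Y|q'] b1 b2 //=; do ?[case E2: (b2 X) => /=; rewrite ?E2];
  do ?[case E3: (b2 Y) => /=; rewrite ?E3]; by rewrite ?andbT.
- by move=> [X|q] b1 b2 //=; case E2: (b2 X) => /=; rewrite ?E2.
- by move=> g IH b1 b2; apply: IH.
- by move=> g IHg h IHh b1 b2; rewrite IHg IHh.
- by move=> x g IH b1 b2; apply: IH.
- by move=> x g IH b1 b2; apply: IH.
Qed.

Definition mask1 (C : model U) (b1 : nat -> bool) (e1 : nat -> option (mu C)) :=
  fun z => if b1 z then e1 z else None.
Definition mask2 (C : model U) (b2 : nat -> bool) (e2 : nat -> {set mu C}) :=
  fun z => if b2 z then e2 z else set0.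

Lemma sval_cs (C : model U) b2 (e2 : nat -> {set mu C}) Y :
  Defs.sval (mask2 b2 e2) Y = Defs.sval e2 (cs b2 Y).
Proof.
case: Y => [X|q] //=; rewrite /mask2; case: ifP => //= _.
Qed.

Lemma sat_close (C : model U) f b1 b2 (e1 : nat -> option (mu C)) e2 :
  sat (mask1 b1 e1) (mask2 b2 e2) f <-> sat e1 e2 (close b1 b2 f).
Proof.
elim: f b1 b2 e1 e2 => /=.
- move=> x y b1 b2 e1 e2; rewrite /mask1; case: (b1 x); case: (b1 y) => /=;
  try (by []); rewrite card_setF; split => //; by case: (e1 x).
- move=> u x b1 b2 e1 e2; rewrite /mask1; case: (b1 x) => //=; rewrite card_setF; by split.
- move=> x y b1 b2 e1 e2; rewrite /mask1; case: (b1 x); case: (b1 y) => /=;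
  try (by []); rewrite card_setF; split => //; by case: (e1 x).
- move=> x Y b1 b2 e1 e2; rewrite /mask1; case: (b1 x) => /=.
  + by rewrite sval_cs.
  + by rewrite card_setF; split.
- by move=> k m Y b1 b2 e1 e2; rewrite sval_cs.
- by move=> Y Z b1 b2 e1 e2; rewrite !sval_cs.
- by move=> Y b1 b2 e1 e2; rewrite sval_cs.
- by move=> g IH b1 b2 e1 e2; rewrite IH.
- by move=> g IHg h IHh b1 b2 e1 e2; rewrite IHg IHh.
- move=> x g IH b1 b2 e1 e2.
  have E : forall t, mask1 (fun z => (z == x) || b1 z) (fun z => if z == x then Some t else e1 z)
     = (fun z => if z == x then Some t else mask1 b1 e1 z).
    by move=> t; apply: functional_extensionality => z; rewrite /mask1; case: (z == x).
  split => -[t Ht]; exists t.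
  + by apply/(proj1 (IH _ _ _ _)); rewrite E.
  + by move/(proj2 (IH _ _ _ _)): Ht; rewrite E.
- move=> X g IH b1 b2 e1 e2.
  have E : forall S, mask2 (fun z => (z == X) || b2 z) (fun z => if z == X then S else e2 z)
     = (fun z => if z == X then S else mask2 b2 e2 z).
    by move=> S; apply: functional_extensionality => z; rewrite /mask2; case: (z == X).
  split => -[S HS]; exists S.
  + by apply/(proj1 (IH _ _ _ _)); rewrite E.
  + by move/(proj2 (IH _ _ _ _)): HS; rewrite E.
Qed.

Definition Eqv (M : nat -> Prop) (r : nat) (C D : model U)
  (e1 : nat -> option (mu C)) (e2 : nat -> {set mu C})
  (e1' : nat -> option (mu D)) (e2' : nat -> {set mu D}) :=
  forall f : form U, qr f <= r -> mods_in M f -> (sat e1 e2 f <-> sat e1' e2' f).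

Lemma Eqv_sym M r C D e1 e2 e1' e2' :
  @Eqv M r C D e1 e2 e1' e2' -> @Eqv M r D C e1' e2' e1 e2.
Proof. by move=> H f Hq Hm; split => /(H f Hq Hm). Qed.

Lemma Eqv_le M r r' C D e1 e2 e1' e2' : r' <= r ->
  @Eqv M r C D e1 e2 e1' e2' -> @Eqv M r' C D e1 e2 e1' e2'.
Proof. by move=> le H f Hq Hm; apply: H => //; apply: leq_trans le. Qed.

Lemma Eqv_none M r C D e1 e2 e1' e2' x :
  @Eqv M r C D e1 e2 e1' e2' ->
  @Eqv M r C D (fun z => if z == x then None else e1 z) e2
               (fun z => if z == x then None else e1' z) e2'.
Proof.
move=> H f Hq Hm.
have E1 : forall (C : model U) (e1 : nat -> option (mu C)) (e2 : nat -> {set mu C}),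
   sat (fun z => if z == x then None else e1 z) e2 f <->
   sat e1 e2 (close (fun z => z != x) (fun _ => true) f).
  move=> C0 e10 e20; rewrite -sat_close.
  have -> : mask2 (fun _ => true) e20 = e20 by [].
  have -> : mask1 (fun z => z != x) e10 = (fun z => if z == x then None else e10 z) => //.
  by apply: functional_extensionality => z; rewrite /mask1; case: (z == x).
rewrite !E1; apply: H; [by rewrite qr_close | exact: mods_close].
Qed.


Lemma ex_set M r (C D : model U) (e1 : nat -> option (mu C)) e2
  (e1' : nat -> option (mu D)) e2' X (S : {set mu C}) :
  Eqv M r.+1 e1 e2 e1' e2' ->
  exists T : {set mu D}, Eqv M r e1 (fun z => if z == X then S else e2 z)
                                 e1' (fun z => if z == X then T else e2' z).
Proof.
move=> H; apply: NNPP => Hn.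
pose eS := (fun z => if z == X then S else e2 z).
pose eT := fun T : {set mu D} => (fun z => if z == X then T else e2' z).
have Hall : forall T, exists f, [/\ qr f <= r, mods_in M f &
    ~ (sat e1 eS f <-> sat e1' (eT T) f)].
  move=> T; apply: NNPP => HT; apply: Hn; exists T => f Hq Hm.
  apply: NNPP => Hf; apply: HT; exists f; by split.
have Hl : forall L : seq {set mu D}, exists f, [/\ qr f <= r, mods_in M f,
    sat e1 eS f & forall T, T \in L -> ~ sat e1' (eT T) f].
  elim => [|T L [f [Hq Hm Hs HL]]].
  - exists FTrue; split => //; exact: sat_FFalse.
  - have [g [Hgq Hgm Hg]] := Hall T.
    have [g' [Hq' Hm' Hs' Hn']] : exists g', [/\ qr g' <= r, mods_in M g',
        sat e1 eS g' & ~ sat e1' (eT T) g'].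
      case: (classic (sat e1 eS g)) => Hc.
      + exists g; split => // Hd; apply: Hg; tauto.
      + exists (FNot g); split => //= Hd; apply: Hg; tauto.
    exists (FAnd g' f); split => //=; first by rewrite geq_max Hq' Hq.
    move=> T0; rewrite in_cons; case/orP => [/eqP -> | HT0] [] //.
    by move=> _; apply: HL.
have [f [Hq Hm Hs HL]] := Hl (enum [set: {set mu D}]).
have : sat e1 e2 (FEx2 X f) by exists S.
move/(H (FEx2 X f) Hq Hm) => -[T HT].
by apply: (HL T) => //; rewrite mem_enum in_setT.
Qed.

Lemma ex_elt M r (C D : model U) (e1 : nat -> option (mu C)) e2
  (e1' : nat -> option (mu D)) e2' x (t : mu C) :
  Eqv M r.+1 e1 e2 e1' e2' ->
  exists t' : mu D, Eqv M r (fun z => if z == x then Some t else e1 z) e2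
                            (fun z => if z == x then Some t' else e1' z) e2'.
Proof.
move=> H; apply: NNPP => Hn.
pose eS := (fun z => if z == x then Some t else e1 z).
pose eT := fun t' : mu D => (fun z => if z == x then Some t' else e1' z).
have Hall : forall T, exists f, [/\ qr f <= r, mods_in M f &
    ~ (sat eS e2 f <-> sat (eT T) e2' f)].
  move=> T; apply: NNPP => HT; apply: Hn; exists T => f Hq Hm.
  apply: NNPP => Hf; apply: HT; exists f; by split.
have Hl : forall L : seq (mu D), exists f, [/\ qr f <= r, mods_in M f,
    sat eS e2 f & forall T, T \in L -> ~ sat (eT T) e2' f].
  elim => [|T L [f [Hq Hm Hs HL]]].
  - exists FTrue; split => //; exact: sat_FFalse.
  - have [g [Hgq Hgm Hg]] := Hall T.
    have [g' [Hq' Hm' Hs' Hn']] : exists g', [/\ qr g' <= r, mods_in M g',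
        sat eS e2 g' & ~ sat (eT T) e2' g'].
      case: (classic (sat eS e2 g)) => Hc.
      + exists g; split => // Hd; apply: Hg; tauto.
      + exists (FNot g); split => //= Hd; apply: Hg; tauto.
    exists (FAnd g' f); split => //=; first by rewrite geq_max Hq' Hq.
    move=> T0; rewrite in_cons; case/orP => [/eqP -> | HT0] [] //.
    by move=> _; apply: HL.
have [f [Hq Hm Hs HL]] := Hl (enum [set: mu D]).
have : sat e1 e2 (FEx1 x f) by exists t.
move/(H (FEx1 x f) Hq Hm) => -[T HT].
by apply: (HL T) => //; rewrite mem_enum in_setT.
Qed.

End Gen.


Lemma has_enum (T : finType) (P : pred T) : has P (enum T) = [exists x, P x].
Proof.
apply/hasP/existsP => [[x _ Px]|[x Px]]; first by exists x.
by exists x => //; rewrite mem_enum.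
Qed.

Lemma card_sig (I : finType) (T_ : I -> finType) (S : {set {i : I & T_ i}}) :
  #|S| = \sum_i #|[set c : T_ i | Tagged T_ c \in S]|.
Proof.
rewrite -sum1_card.
transitivity (\sum_i \sum_(c in [set c : T_ i | Tagged T_ c \in S]) 1).
  rewrite (sig_big_dep (fun i => true) (fun i c => c \in [set c : T_ i | Tagged T_ c \in S])
  (fun _ _ => 1)) /=.
  by apply: eq_bigl => -[i c]; rewrite /= inE.
by apply: eq_bigr => i _; rewrite sum1_card.
Qed.

Definition QOr U (a b : qf1 U) := QNot (QAnd (QNot a) (QNot b)).
Definition bigor U (s : seq (qf1 U)) := foldr (@QOr U) (QFalse U) s.
Definition qconst U (b : bool) : qf1 U := if b then QTrue U else QFalse U.

Lemma qsat_QOr U (C : model U) t a b : qsat (A:=C) t (QOr a b) = qsat t a || qsat t b.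
Proof. by rewrite /= negb_and !negbK. Qed.
Lemma qsat_bigor U (C : model U) t s : qsat (A:=C) t (bigor s) = has (qsat t) s.
Proof. by elim: s => //= q s IH; rewrite negb_and !negbK IH. Qed.
Lemma qsat_qconst U (C : model U) t b : qsat (A:=C) t (qconst U b) = b.
Proof. by case: b. Qed.

Section Out.
Variables (Sig : finType) (arS : Sig -> nat) (X : Type) (arX : X -> nat) (n : nat)
  (G : hg arX n).
Variable A : forall x : X, model (sigU arS (arX x)).

Definition Fu : finType := {v : hv G & mu (A (hlab v))}.
Definition TT := fun v : hv G => mu (A (hlab v)).

Definition proj (v : hv G) (p : Fu) : option (mu (A (hlab v))) :=
  [pick c | Tagged TT c == p].

Lemma proj_self v (c : TT v) : proj v (Tagged TT c) = Some c.
Proof.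
rewrite /proj; case: pickP => [c' /eqP H | H].
  by congr Some; have := f_equal (tagged_as (Tagged TT c)) H; rewrite !tagged_asE.
by move: (H c); rewrite eqxx.
Qed.

Lemma projP v p c : proj v p = Some c -> p = Tagged TT c.
Proof. by rewrite /proj; case: pickP => // c' /eqP H [<-]. Qed.

Lemma proj_neq w v (c : TT v) : w != v -> proj w (Tagged TT c) = None.
Proof.
move=> ne; case E: (proj w _) => [c'|] //.
by move: (f_equal tag (projP E)) => /= Ewv; rewrite Ewv eqxx in ne.
Qed.

Lemma exists_proj (F : forall v, option (mu (A (hlab v))) -> bool) p :
  (forall v, F v None = false) ->
  [exists v, F v (proj v p)] = F (tag p) (Some (tagged p)).
Proof.
case: p => v c HF /=.
apply/existsP/idP => [[w]|H]; last by exists v; rewrite (proj_self (v:=v) c).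
case E: (proj w _) => [c'|]; last by rewrite HF.
have E' := projP E.
by move: (f_equal (fun p : Fu => F (tag p) (Some (tagged p))) E') => /= ->.
Qed.

Definition mEF (p p' : Fu) : bool :=
  [exists v, if proj v p is Some c then
     (if proj v p' is Some c' then mE (A (hlab v)) c c' else false) else false]
  || [exists v, if proj v p is Some c then
       [exists v', if proj v' p' is Some c' then
         [exists j : 'I_(arX (hlab v)), exists j' : 'I_(arX (hlab v')),
           [&& mP (A (hlab v)) (inr j) c, mP (A (hlab v')) (inr j') c' &
               hedge (h:=G) (existT _ v j) (existT _ v' j')]] else false] else false].

Definition mPF (u : sigU arS n) (p : Fu) : bool :=
  match u with
  | inl ai => [exists v, if proj v p is Some c then mP (A (hlab v)) (inl ai) c else false]
  | inr k => [exists v, if proj v p is Some c then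
       [exists j : 'I_(arX (hlab v)), mP (A (hlab v)) (inr j) c &&
          (hport (h:=G) (existT _ v j) == k)] else false]
  end.

Definition FA : model (sigU arS n) := @Model _ Fu mEF mPF.

Definition res1 v (E1 : nat -> option Fu) : nat -> option (mu (A (hlab v))) :=
  fun z => obind (proj v) (E1 z).
Definition res2 v (E2 : nat -> {set Fu}) : nat -> {set mu (A (hlab v))} :=
  fun z => [set c | Tagged TT c \in E2 z].

Definition Uv (v : hv G) := sigU arS (arX (hlab v)).

Fixpoint tq v (q : qf1 (sigU arS n)) : qf1 (Uv v) :=
  match q with
  | QTrue => QTrue _
  | QE => QOr (QE _) (bigor [seq bigor [seq QAnd (QAnd (QP (inr j : Uv v)) (QP (inr j' : Uv v)))
            (qconst _ (hedge (h:=G) (existT _ v j) (existT _ v j'))) | j' <- enum 'I_(arX (hlab v))]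
          | j <- enum 'I_(arX (hlab v))])
  | QP (inl ai) => QP (inl ai : Uv v)
  | QP (inr k) => bigor [seq QAnd (QP (inr j : Uv v)) (qconst _ (hport (h:=G) (existT _ v j) == k))
          | j <- enum 'I_(arX (hlab v))]
  | QNot q => QNot (tq v q)
  | QAnd q r => QAnd (tq v q) (tq v r)
  end.

Lemma qsat_tq v (c : mu (A (hlab v))) q :
  qsat (A:=FA) (Tagged TT c) q = qsat (A:=A (hlab v)) c (tq v q).
Proof.
elim: q.
- by [].
- rewrite [tq _ _]/= qsat_QOr [qsat _ (QE _)]/= [qsat _ (QE _)]/= /mEF.
  rewrite (@exists_proj (fun w o => if o is Some c0 then
     (if proj w (Tagged TT c) is Some c' then mE (A (hlab w)) c0 c' else false) else false)) //=.
  rewrite proj_self; congr orb.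
  rewrite (@exists_proj (fun w o => if o is Some c0 then
       [exists v', if proj v' (Tagged TT c) is Some c' then
         [exists j : 'I_(arX (hlab w)), exists j' : 'I_(arX (hlab v')),
           [&& mP (A (hlab w)) (inr j) c0, mP (A (hlab v')) (inr j') c' &
               hedge (h:=G) (existT _ w j) (existT _ v' j')]] else false] else false)) //=.
  rewrite (@exists_proj (fun w o => if o is Some c' then
         [exists j : 'I_(arX (hlab v)), exists j' : 'I_(arX (hlab w)),
           [&& mP (A (hlab v)) (inr j) c, mP (A (hlab w)) (inr j') c' &
               hedge (h:=G) (existT _ v j) (existT _ w j')]] else false)) //=.
  rewrite qsat_bigor has_map has_enum; apply: eq_existsb => j /=.
  rewrite qsat_bigor has_map has_enum; apply: eq_existsb => j' /=.
  by rewrite qsat_qconst andbA.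
- case=> [ai|k] /=.
  + by rewrite (@exists_proj (fun w o => if o is Some c0 then mP (A (hlab w)) (inl ai) c0 else false)).
  + rewrite (@exists_proj (fun w o => if o is Some c0 then
       [exists j : 'I_(arX (hlab w)), mP (A (hlab w)) (inr j) c0 &&
          (hport (h:=G) (existT _ w j) == k)] else false)) //=.
    rewrite qsat_bigor has_map has_enum; apply: eq_existsb => j /=.
    by rewrite qsat_qconst.
- by move=> q /= ->.
- by move=> q /= IH r /= IH'; rewrite IH IH'.
Qed.

Definition ct v (Y : sterm (sigU arS n)) : sterm (Uv v) :=
  match Y with SVar Z => SVar _ Z | SConst q => SConst (tq v q) end.

Lemma sval_ct v E2 Y :
  Defs.sval (A:=A (hlab v)) (res2 v E2) (ct v Y) = [set c | Tagged TT c \in Defs.sval (A:=FA) E2 Y].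
Proof. by case: Y => [Z|q] //=; apply/setP => c; rewrite !inE qsat_tq. Qed.

Definition Pc v E1 E2 (f : form (Uv v)) := sat (A:=A (hlab v)) (res1 v E1) (res2 v E2) f.
Arguments Pc : clear implicits.
Arguments Pc v E1 E2 f.

Lemma L_FE E1 E2 x y :
  sat (A:=FA) E1 E2 (FE _ x y) <->
  (exists v, Pc v E1 E2 (FE _ x y)) \/
  (exists v v' (j : 'I_(arX (hlab v))) (j' : 'I_(arX (hlab v'))),
     [/\ Pc v E1 E2 (FP (inr j : Uv v) x), Pc v' E1 E2 (FP (inr j' : Uv v') y) &
         hedge (h:=G) (existT _ v j) (existT _ v' j')]).
Proof.
rewrite /Pc /res1 /=; case: (E1 x) => [p|]; case: (E1 y) => [p'|] /=.
- split.
  + case/orP => [/existsP [v H] | /existsP [v H]].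
    * left; exists v; move: H; case: (proj v p) => // c; by case: (proj v p').
    * right; move: H; case E: (proj v p) => [c|] //; case/existsP => v'.
      case E': (proj v' p') => [c'|] //; case/existsP => j /existsP [j' /and3P [H1 H2 H3]].
      by exists v, v', j, j'; rewrite E E'.
  + case => [[v H] | [v [v' [j [j' [H1 H2 H3]]]]]]; apply/orP; [left|right]; apply/existsP; exists v.
    * by move: H; case: (proj v p) => // c; case: (proj v p').
    * move: H1 H2; case: (proj v p) => // c H1 H2; apply/existsP; exists v'.
      move: H2; case: (proj v' p') => // c' H2.
      apply/existsP; exists j; apply/existsP; exists j'.
      by rewrite H1 H2 H3.
all: split => [[]|]; case => [[v H]|[v [v' [j [j' [H1 H2 H3]]]]]];
  first [by move: H; case: (proj v _) | by [] | by move: H1 H2; case: (proj v _); case: (proj v' _) ].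
Qed.

Lemma L_FPl E1 E2 ai x :
  sat (A:=FA) E1 E2 (FP (inl ai) x) <-> exists v, Pc v E1 E2 (FP (inl ai : Uv v) x).
Proof.
rewrite /Pc /res1 /=; case: (E1 x) => [p|] /=; last by split => // -[].
split => [/existsP [v H]|[v H]]; [|apply/existsP]; exists v; move: H; by case: (proj v p).
Qed.

Lemma L_FPr E1 E2 k x :
  sat (A:=FA) E1 E2 (FP (inr k) x) <->
  exists v (j : 'I_(arX (hlab v))), Pc v E1 E2 (FP (inr j : Uv v) x) /\
     hport (h:=G) (existT _ v j) = k.
Proof.
rewrite /Pc /res1 /=; case: (E1 x) => [p|] /=; last by split => // -[v [j []]].
split => [/existsP [v H]|[v [j [H1 H2]]]].
- move: H; case E: (proj v p) => [c|] // /existsP [j /andP [H1 /eqP H2]]; by exists v, j; rewrite E.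
- apply/existsP; exists v; move: H1; case: (proj v p) => // c H1.
  by apply/existsP; exists j; rewrite H1 H2 eqxx.
Qed.

Lemma L_FEq E1 E2 x y :
  sat (A:=FA) E1 E2 (FEq _ x y) <-> exists v, Pc v E1 E2 (FEq _ x y).
Proof.
rewrite /Pc /res1 /=; case: (E1 x) => [p|]; case: (E1 y) => [p'|] /=;
  try by split => // -[].
split => [<-|[v]].
- by case: p => v c; exists v; rewrite proj_self.
- case E: (proj v p) => [a|] //; case E': (proj v p') => [b|] // eab.
  by rewrite (projP E) (projP E') eab.
by split => // -[v]; case: (proj v p).
Qed.

Lemma L_FIn E1 E2 x Y :
  sat (A:=FA) E1 E2 (FIn x Y) <-> exists v, Pc v E1 E2 (FIn x (ct v Y)).
Proof.
rewrite /Pc /res1 /=; case: (E1 x) => [p|] /=; last by split => // -[].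
split => [|[v]].
- by case: p => v c Hp; exists v; rewrite proj_self sval_ct inE.
- case E: (proj v p) => [a|] //; by rewrite sval_ct inE (projP E).
Qed.

Lemma L_card E2 Y :
  #|Defs.sval (A:=FA) E2 Y| = \sum_v #|Defs.sval (A:=A (hlab v)) (res2 v E2) (ct v Y)|.
Proof. by rewrite card_sig; apply: eq_bigr => v _; rewrite sval_ct. Qed.

Lemma L_sub E1 E2 Y Z :
  sat (A:=FA) E1 E2 (FSub Y Z) <-> forall v, Pc v E1 E2 (FSub (ct v Y) (ct v Z)).
Proof.
rewrite /Pc /=; split.
- move/subsetP => H v; rewrite !sval_ct; apply/subsetP => c; rewrite !inE; apply: H.
- move=> H; apply/subsetP => -[v c] Hp; move: (H v); rewrite !sval_ct => /subsetP /(_ c).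
  by rewrite !inE; apply.
Qed.

Lemma res1_upd w E1 x p :
  res1 w (fun z => if z == x then Some p else E1 z) =
  (fun z => if z == x then proj w p else res1 w E1 z).
Proof. by apply: functional_extensionality => z; rewrite /res1; case: (z == x). Qed.

Lemma res2_upd w E2 Z S :
  res2 w (fun z => if z == Z then S else E2 z) =
  (fun z => if z == Z then [set c | Tagged TT c \in S] else res2 w E2 z).
Proof. by apply: functional_extensionality => z; rewrite /res2; case: (z == Z). Qed.

Lemma mEF_tagged v (c : TT v) v' (c' : TT v') :
  mEF (Tagged TT c) (Tagged TT c') =
  (if proj v (Tagged TT c') is Some c1 then mE (A (hlab v)) c c1 else false) ||
  [exists j : 'I_(arX (hlab v)), exists j' : 'I_(arX (hlab v')),
     [&& mP (A (hlab v)) (inr j) c, mP (A (hlab v')) (inr j') c' &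
         hedge (h:=G) (existT _ v j) (existT _ v' j')]].
Proof.
rewrite /mEF.
rewrite (@exists_proj (fun w o => if o is Some c0 then
     (if proj w (Tagged TT c') is Some c1 then mE (A (hlab w)) c0 c1 else false) else false)) //=.
rewrite (@exists_proj (fun w o => if o is Some c0 then
       [exists v', if proj v' (Tagged TT c') is Some c1 then
         [exists j : 'I_(arX (hlab w)), exists j' : 'I_(arX (hlab v')),
           [&& mP (A (hlab w)) (inr j) c0, mP (A (hlab v')) (inr j') c1 &
               hedge (h:=G) (existT _ w j) (existT _ v' j')]] else false] else false)) //=.
by rewrite (@exists_proj (fun w o => if o is Some c1 then
         [exists j : 'I_(arX (hlab v)), exists j' : 'I_(arX (hlab w)),
           [&& mP (A (hlab v)) (inr j) c, mP (A (hlab w)) (inr j') c1 &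
               hedge (h:=G) (existT _ v j) (existT _ w j')]] else false)) //=.
Qed.

Lemma mPF_inl v (c : TT v) ai : mPF (inl ai) (Tagged TT c) = mP (A (hlab v)) (inl ai) c.
Proof.
by rewrite /= (@exists_proj (fun w o => if o is Some c0 then mP (A (hlab w)) (inl ai) c0 else false)).
Qed.

Lemma mPF_inr v (c : TT v) k : mPF (inr k) (Tagged TT c) =
  [exists j : 'I_(arX (hlab v)), mP (A (hlab v)) (inr j) c && (hport (h:=G) (existT _ v j) == k)].
Proof.
by rewrite /= (@exists_proj (fun w o => if o is Some c0 then
       [exists j : 'I_(arX (hlab w)), mP (A (hlab w)) (inr j) c0 &&
          (hport (h:=G) (existT _ w j) == k)] else false)).
Qed.

End Out.


Lemma minn_sum (I : Type) (r : seq I) (F : I -> nat) :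
  minn (\sum_(i <- r) F i) 2 = minn (\sum_(i <- r) minn (F i) 2) 2.
Proof.
elim: r => [|i r IH]; first by rewrite !big_nil.
rewrite !big_cons; move: IH; lia.
Qed.

Lemma sub_setF (T : finType) (S : {set T}) : (S \subset [set _ : T | ~~ true]) = (#|S| == 0).
Proof.
have -> : [set _ : T | ~~ true] = set0 by apply/setP => z; rewrite !inE.
by rewrite subset0 cards_eq0.
Qed.

Section Main.
Variables (Sig : finType) (arS : Sig -> nat) (X : Type) (arX : X -> nat) (n : nat)
  (G : hg arX n) (M : nat -> Prop).

Definition Inv r (A B : forall x : X, model (sigU arS (arX x)))
  (E1 : nat -> option (mu (FA G A))) E2 (E1' : nat -> option (mu (FA G B))) E2' :=
  forall v, Eqv M r (res1 (A:=A) v E1) (res2 (A:=A) v E2) (res1 (A:=B) v E1') (res2 (A:=B) v E2').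

Lemma Inv_sym r A B E1 E2 E1' E2' :
  @Inv r A B E1 E2 E1' E2' -> @Inv r B A E1' E2' E1 E2.
Proof. by move=> H v; apply: Eqv_sym. Qed.

Lemma main (f : form (sigU arS n)) : mods_in M f ->
  forall r A B E1 E2 E1' E2', qr f <= r -> @Inv r A B E1 E2 E1' E2' ->
  (sat (A:=FA G A) E1 E2 f <-> sat (A:=FA G B) E1' E2' f).
Proof.
elim: f.
- move=> x y _ r A B E1 E2 E1' E2' _ HI.
  have tr v g : qr g = 0 -> mods_in M g -> (Pc (v:=v) E1 E2 g <-> Pc (v:=v) E1' E2' g).
    by move=> Hq Hm; apply: HI => //; rewrite Hq.
  rewrite !L_FE; split; case => [[v H]|[v [v' [j [j' [H1 H2 H3]]]]]].
  + by left; exists v; apply/(tr v (FE _ x y)).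
  + by right; exists v, v', j, j'; split => //; [apply/(tr v (FP _ x)) | apply/(tr v' (FP _ y))].
  + by left; exists v; apply/(tr v (FE _ x y)).
  + by right; exists v, v', j, j'; split => //; [apply/(tr v (FP _ x)) | apply/(tr v' (FP _ y))].
- move=> [ai|k] x _ r A B E1 E2 E1' E2' _ HI.
  + have tr v g : qr g = 0 -> mods_in M g -> (Pc (v:=v) E1 E2 g <-> Pc (v:=v) E1' E2' g).
      by move=> Hq Hm; apply: HI => //; rewrite Hq.
    by rewrite !L_FPl; split => -[v H]; exists v; apply/(tr v (FP _ x)).
  + have tr v g : qr g = 0 -> mods_in M g -> (Pc (v:=v) E1 E2 g <-> Pc (v:=v) E1' E2' g).
      by move=> Hq Hm; apply: HI => //; rewrite Hq.
    by rewrite !L_FPr; split => -[v [j [H1 H2]]]; exists v, j; split => //; apply/(tr v (FP _ x)).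
- move=> x y _ r A B E1 E2 E1' E2' _ HI.
  have tr v g : qr g = 0 -> mods_in M g -> (Pc (v:=v) E1 E2 g <-> Pc (v:=v) E1' E2' g).
    by move=> Hq Hm; apply: HI => //; rewrite Hq.
  by rewrite !L_FEq; split => -[v H]; exists v; apply/(tr v (FEq _ x y)).
- move=> x Y _ r A B E1 E2 E1' E2' _ HI.
  have tr v g : qr g = 0 -> mods_in M g -> (Pc (v:=v) E1 E2 g <-> Pc (v:=v) E1' E2' g).
    by move=> Hq Hm; apply: HI => //; rewrite Hq.
  by rewrite !L_FIn; split => -[v H]; exists v; apply/(tr v (FIn x _)).
- move=> k m Y Hm r A B E1 E2 E1' E2' _ HI.
  have tr v g : qr g = 0 -> mods_in M g -> (Pc (v:=v) E1 E2 g <-> Pc (v:=v) E1' E2' g).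
    by move=> Hq Hm'; apply: HI => //; rewrite Hq.
  rewrite /= !L_card.
  have eqm v : #|Defs.sval (A:=A (hlab v)) (res2 v E2) (ct v Y)| =
               #|Defs.sval (A:=B (hlab v)) (res2 v E2') (ct v Y)| %[mod m].
    have := (tr v (FMod #|Defs.sval (A:=A (hlab v)) (res2 v E2) (ct v Y)| m (ct v Y)) erefl Hm).1 erefl.
    by move=> /= ->.
  have -> : (\sum_v #|Defs.sval (A:=A (hlab v)) (res2 v E2) (ct v Y)|) %% m =
            (\sum_v #|Defs.sval (A:=B (hlab v)) (res2 v E2') (ct v Y)|) %% m.
    by rewrite -modn_summ -[RHS]modn_summ; congr (_ %% _); apply: eq_bigr => v _; apply: eqm.
  by [].
- move=> Y Z _ r A B E1 E2 E1' E2' _ HI.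
  have tr v g : qr g = 0 -> mods_in M g -> (Pc (v:=v) E1 E2 g <-> Pc (v:=v) E1' E2' g).
    by move=> Hq Hm; apply: HI => //; rewrite Hq.
  by rewrite !L_sub; split => H v; [apply/(tr v (FSub _ _) erefl I).1 | apply/(tr v (FSub _ _) erefl I).2]; apply: H.
- move=> Y _ r A B E1 E2 E1' E2' _ HI.
  have tr v g : qr g = 0 -> mods_in M g -> (Pc (v:=v) E1 E2 g <-> Pc (v:=v) E1' E2' g).
    by move=> Hq Hm; apply: HI => //; rewrite Hq.
  rewrite /= !L_card.
  have mv v : minn #|Defs.sval (A:=A (hlab v)) (res2 v E2) (ct v Y)| 2 =
              minn #|Defs.sval (A:=B (hlab v)) (res2 v E2') (ct v Y)| 2.
    have H1 := tr v (FSing (ct v Y)) erefl I.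
    have H0 := tr v (FSub (ct v Y) (SConst (QFalse _))) erefl I.
    rewrite /Pc /= !sub_setF in H1 H0.
    move: H1 H0; set a := #|_|; set b := #|_|.
    move=> H1 H0; have H0' : (a = 0 <-> b = 0).
      by split => H; [apply/eqP; apply/H0; apply/eqP | apply/eqP; apply/H0; apply/eqP].
    move: H1 H0'; clear; lia.
  have E : forall s : nat, s = 1 <-> minn s 2 = 1 by move=> s; lia.
  rewrite E [X in _ <-> X]E minn_sum [in X in _ <-> X]minn_sum.
  by rewrite (eq_bigr _ (fun v _ => mv v)).
- move=> g IH Hm r A B E1 E2 E1' E2' Hq HI /=.
  by have := IH Hm r A B E1 E2 E1' E2' Hq HI; tauto.
- move=> g IHg h IHh [Hmg Hmh] r A B E1 E2 E1' E2'; rewrite /= geq_max => /andP [Hqg Hqh] HI.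
  have := IHg Hmg r A B E1 E2 E1' E2' Hqg HI; have := IHh Hmh r A B E1 E2 E1' E2' Hqh HI.
  tauto.
- move=> x g IH Hm [|r] //= A B E1 E2 E1' E2' Hq.
  suff dir : forall A B E1 E2 E1' E2', @Inv r.+1 A B E1 E2 E1' E2' ->
      sat (A:=FA G A) E1 E2 (FEx1 x g) -> sat (A:=FA G B) E1' E2' (FEx1 x g).
    by move=> HI; split; apply: dir => //; apply: Inv_sym.
  move=> {}A {}B {}E1 {}E2 {}E1' {}E2' HI /= [[v c] H].
  have [c' Hc'] := ex_elt x c (HI v).
  exists (Tagged (TT (G:=G) B) c').
  apply: (proj1 (IH Hm r A B _ E2 _ E2' Hq _) H) => w.
  rewrite !res1_upd.
  have [ew|ne] := eqVneq w v.
  + subst w; rewrite !proj_self; exact: Hc'.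
  + rewrite !proj_neq //; apply: Eqv_none; apply: Eqv_le (HI w); exact: leqnSn.
- move=> Z g IH Hm [|r] //= A B E1 E2 E1' E2' Hq.
  suff dir : forall A B E1 E2 E1' E2', @Inv r.+1 A B E1 E2 E1' E2' ->
      sat (A:=FA G A) E1 E2 (FEx2 Z g) -> sat (A:=FA G B) E1' E2' (FEx2 Z g).
    by move=> HI; split; apply: dir => //; apply: Inv_sym.
  move=> {}A {}B {}E1 {}E2 {}E1' {}E2' HI /= [S H].
  have HT v := ex_set Z [set c | Tagged (TT (G:=G) A) c \in S] (HI v).
  pose T v := proj1_sig (constructive_indefinite_description _ (HT v)).
  have HTs v : Eqv M r (res1 (A:=A) v E1)
       (fun z => if z == Z then [set c | Tagged (TT (G:=G) A) c \in S] else res2 (A:=A) v E2 z)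
       (res1 (A:=B) v E1') (fun z => if z == Z then T v else res2 (A:=B) v E2' z).
    exact: (proj2_sig (constructive_indefinite_description _ (HT v))).
  exists [set p : Fu G B | tagged p \in T (tag p)].
  apply: (proj1 (IH Hm r A B E1 _ E1' _ Hq _) H) => w.
  rewrite !res2_upd.
  have -> : [set c | Tagged (TT (G:=G) B) c \in [set p : Fu G B | tagged p \in T (tag p)]] = T w.
    by apply/setP => c; rewrite !inE.
  exact: HTs.
Qed.

End Main.


Unset Implicit Arguments. Set Strict Implicit.

Theorem lemma5p13
  (Sig : finType) (arS : Sig -> nat) (hS : forall a, 0 < arS a)
  (X : Type) (arX : X -> nat) (hX : forall x, 0 < arX x)
  (n : nat) (G : hg arX n) :
  exists f : (forall x : X, model (sigU arS (arX x))) -> model (sigU arS n),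
    (forall (r : nat) (M : nat -> Prop)
            (A B : forall x : X, model (sigU arS (arX x))),
        (forall x, in_floor_image (A x)) ->
        (forall x, in_floor_image (B x)) ->
        (forall x, rM_equiv r M (A x) (B x)) ->
        rM_equiv r M (f A) (f B)) /\
    (forall eta : forall x : X, hg arS (arX x),
        miso (f (fun x => floor (eta x))) (floor (hflatten G eta))).
Proof.
exists (FA G); split.
- move=> r M A B _ _ H f _ Hq Hm.
  apply: (@main _ _ _ _ _ G M f Hm r A B (fun _ => None) (fun _ => set0)
            (fun _ => None) (fun _ => set0) Hq) => v g Hq' Hm'.
  have E2 : forall (C : forall x : X, model (sigU arS (arX x))),
      res2 (A:=C) v (fun _ => set0) = fun _ => set0.
    by move=> C; apply: functional_extensionality => z; apply/setP => c; rewrite !inE.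
  rewrite !E2.
  have E (C : model (sigU arS (arX (hlab v)))) :
     sat (A:=C) (fun _ => None) (fun _ => set0) g <->
     holds C (close (fun _ => false) (fun _ => false) g).
    exact: (sat_close g (fun _ => false) (fun _ => false) (fun _ => None) (fun _ => set0)).
  apply: iff_trans (E _) _; apply: iff_trans _ (iff_sym (E _)).
  apply: H; [exact: wsc_close | by rewrite qr_close | exact: mods_close].
- move=> eta.
  pose A := fun x => floor (eta x).
  pose h := fun p : Fu G A => existT (fun q : fhv G eta => 'I_(arS (flab q)))
     (existT _ (tag p) (tag (tagged p))) (tagged (tagged p)).
  exists h; split; [|split].
  + exists (@fsplit _ _ _ _ _ G eta); first by case=> v [w i].
    by case=> [[v w] i].
  + case=> v [w i]; case=> v' [w' i'].
    rewrite [mE (FA G A) _ _]/= mEF_tagged /h /fedge /gcorner /fsplit /=.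
    congr orb.
    * have [ev|ne] := eqVneq v v'.
      - subst v'; rewrite proj_self /= /fsplit /=.
        by rewrite tagged_asE.
      - by rewrite proj_neq // eq_sym.
    * apply/idP/existsP => [H|[j /existsP [j' /and3P [/eqP <- /eqP <- H]]]] //.
      exists (hport (existT _ w i)); apply/existsP; exists (hport (existT _ w' i')).
      by rewrite /= !eqxx.
  + case=> [ai|k] [v [w i]].
    * by move: (mPF_inl (G:=G) (A:=A) (v:=v) (existT _ w i) ai) => /= ->.
    * move: (mPF_inr (G:=G) (A:=A) (v:=v) (existT _ w i) k) => /= ->.
      rewrite /h /fport /gcorner /fsplit /=.
      apply/eqP/existsP => [<-|[j /andP [/eqP <- /eqP ->]]] //.
      by exists (hport (existT _ w i)); rewrite /= !eqxx.
Qed.
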